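(* There exists a countable graph $G$ such that every tree-decomposition $(T,(V_t)_{t\in T})$ of $G$ into finite parts has a node $t$ and sets $Z_1,Z_2\subseteq V_t$ with $|Z_1|=|Z_2|=\ell\in\mathbb N$ such that $G$ does not contain $\ell$ pairwise disjoint $Z_1$–$Z_2$ paths.
   Context: A tree-decomposition $(T,(V_t)_{t\in T})$ of $G$ consists of a tree $T$ and bags $V_t\subseteq V(G)$ covering all vertices and edges of $G$ such that for every vertex $v$ the nodes $t$ with $v\in V_t$ form a subtree; it is into finite parts if all bags are finite. (The conclusion says that the leanness condition fails for the pair of nodes $s=t$.) *)

(* Defs.v *)
From Stdlib Require Import List Arith.
Import ListNotations.

Fixpoint chain {X : Type} (E : X -> X -> Prop) (l : list X) : Prop :=
  match l with
  | x :: ((y :: _) as r) => E x y /\ chain E r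
  | _ => True
  end.

Definition simple_graph {X : Type} (E : X -> X -> Prop) : Prop :=
  (forall x y, E x y -> E y x) /\ (forall x, ~ E x x).

Definition countable (X : Type) : Prop :=
  exists f : X -> nat, forall x y, f x = f y -> x = y.

Definition is_path {X : Type} (E : X -> X -> Prop) (p : list X) : Prop :=
  p <> [] /\ NoDup p /\ chain E p.

Definition ends {X : Type} (p : list X) (a b : X) : Prop :=
  hd_error p = Some a /\ hd_error (rev p) = Some b.

Definition connected {X : Type} (E : X -> X -> Prop) : Prop :=
  forall s t : X, exists p, is_path E p /\ ends p s t.

Definition acyclic {X : Type} (E : X -> X -> Prop) : Prop :=
  ~ exists c x y, is_path E c /\ 3 <= length c /\ ends c x y /\ E y x.

Definition is_tree {X : Type} (E : X -> X -> Prop) : Prop :=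
  simple_graph E /\ connected E /\ acyclic E.

Definition tree_decomposition {V T : Type} (adj : V -> V -> Prop)
    (tE : T -> T -> Prop) (B : T -> V -> Prop) : Prop :=
  is_tree tE /\
  (forall v, exists t, B t v) /\
  (forall u v, adj u v -> exists t, B t u /\ B t v) /\
  (forall v t1 t2, B t1 v -> B t2 v ->
     exists p, is_path tE p /\ ends p t1 t2 /\ Forall (fun t => B t v) p).

Definition finite_parts {V T : Type} (B : T -> V -> Prop) : Prop :=
  forall t, exists l : list V, forall v, B t v -> In v l.

Definition AB_path {V : Type} (adj : V -> V -> Prop) (A Bs : list V)
    (p : list V) : Prop :=
  exists a b, is_path adj p /\ ends p a b /\
    (forall x, In x p -> In x A -> x = a) /\ In a A /\
    (forall x, In x p -> In x Bs -> x = b) /\ In b Bs.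

Definition has_disjoint_AB_paths {V : Type} (adj : V -> V -> Prop)
    (A Bs : list V) (n : nat) : Prop :=
  exists Ps : list (list V), length Ps = n /\
    Forall (AB_path adj A Bs) Ps /\
    (forall i j x, i < j < length Ps -> In x (nth i Ps []) -> ~ In x (nth j Ps [])).

(* Main.v *)
Require Import Defs.
From Stdlib Require Import List Arith Lia Classical ClassicalEpsilon.
Import ListNotations.

Lemma chain_cons_inv {X} (E : X -> X -> Prop) a l : chain E (a :: l) -> chain E l.
Proof. destruct l; simpl; tauto. Qed.

Lemma chain_app_l {X} (E : X -> X -> Prop) l1 l2 : chain E (l1 ++ l2) -> chain E l1.
Proof.
  induction l1 as [|a l1 IH]; simpl; auto.
  destruct l1 as [|b l1']; simpl; auto.
  intros [H1 H2]. split; auto. apply IH. exact H2.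
Qed.

Lemma chain_app_r {X} (E : X -> X -> Prop) l1 l2 : chain E (l1 ++ l2) -> chain E l2.
Proof.
  induction l1 as [|a l1 IH]; simpl; auto.
  intro H. apply IH. exact (chain_cons_inv E a _ H).
Qed.

Lemma chain_join {X} (E : X -> X -> Prop) l1 x l2 :
  chain E (l1 ++ [x]) -> chain E (x :: l2) -> chain E (l1 ++ x :: l2).
Proof.
  induction l1 as [|a l1 IH]; simpl; auto.
  destruct l1 as [|b l1']; simpl.
  - intros [H _] H2. split; auto.
  - intros [H1 H2] H3. split; auto. apply IH; auto.
Qed.

Lemma chain_rev {X} (E : X -> X -> Prop) l :
  (forall x y, E x y -> E y x) -> chain E l -> chain E (rev l).
Proof.
  intros Hs. induction l as [|a l IH]; simpl; auto.
  intro H. destruct l as [|b l']; simpl; auto.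
  simpl in IH. destruct H as [Hab Hc].
  rewrite <- app_assoc. simpl. apply chain_join. apply IH. exact Hc.
  simpl. split; auto.
Qed.

Lemma ends_iff {X} (p : list X) a b :
  ends p a b <-> (exists q, p = a :: q) /\ (exists r, p = r ++ [b]).
Proof.
  unfold ends. split.
  - intros [H1 H2]. split.
    + destruct p; simpl in H1; inversion H1; subst; eauto.
    + destruct (rev p) eqn:E; simpl in H2; inversion H2; subst.
      exists (rev l). rewrite <- (rev_involutive p), E. simpl. reflexivity.
  - intros [[q Hq] [r Hr]]. split.
    + subst; reflexivity.
    + rewrite Hr, rev_app_distr. reflexivity.
Qed.

Lemma path_suffix {X} (E : X -> X -> Prop) l1 x l2 :
  is_path E (l1 ++ x :: l2) -> is_path E (x :: l2).
Proof.
  intros [_ [Hn Hc]]. split; [discriminate|]. split.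
  - exact (NoDup_app_remove_l _ _ Hn).
  - exact (chain_app_r _ _ _ Hc).
Qed.

Lemma path_prefix {X} (E : X -> X -> Prop) l1 x l2 :
  is_path E (l1 ++ x :: l2) -> is_path E (l1 ++ [x]).
Proof.
  intros [_ [Hn Hc]]. replace (l1 ++ x :: l2) with ((l1 ++ [x]) ++ l2) in *
    by (rewrite <- app_assoc; reflexivity).
  split; [destruct l1; discriminate|]. split.
  - exact (NoDup_app_remove_r _ _ Hn).
  - exact (chain_app_l _ _ _ Hc).
Qed.

Lemma first_common {X} (p1 p2 : list X) :
  (exists z, In z p1 /\ In z p2) ->
  exists q2 m r2, p2 = q2 ++ m :: r2 /\ In m p1 /\ (forall z, In z q2 -> ~ In z p1).
Proof.
  induction p2 as [|a p2 IH]; intros [z [H1 H2]]; [destruct H2|].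
  destruct (classic (In a p1)) as [Ha|Ha].
  - exists [], a, p2. simpl. split; [reflexivity|split; [exact Ha|intros _ []]].
  - destruct H2 as [H2|H2]; [subst; contradiction|].
    destruct IH as [q2 [m [r2 [E [Hm Hq]]]]]; [eauto|].
    exists (a :: q2), m, r2. subst. split; auto. split; auto.
    intros w [Hw|Hw]; [subst; auto| auto].
Qed.

Lemma snoc_suffix {X} (l1 l2 r : list X) s :
  l2 <> [] -> l1 ++ l2 = r ++ [s] -> exists r', l2 = r' ++ [s].
Proof.
  intros Hne H. destruct l2 as [|y l2'] using rev_ind; [contradiction|].
  rewrite app_assoc in H. apply app_inj_tail in H. destruct H; subst. eauto.
Qed.

Definition Far {T} (tE : T -> T -> Prop) (t t' s : T) : Prop :=
  exists p, is_path tE p /\ ends p t' s /\ ~ In t p.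

Lemma far_cover {T} (tE : T -> T -> Prop) t t' s :
  is_tree tE -> tE t t' -> Far tE t t' s \/ Far tE t' t s.
Proof.
  intros [[Hsym Hirr] [Hcon _]] He.
  destruct (Hcon t s) as [p [Hp Hends]].
  destruct (classic (In t' p)) as [Hin|Hin].
  - left. destruct (in_split _ _ Hin) as [l1 [l2 E]]. subst p.
    exists (t' :: l2). split; [eapply path_suffix; eauto|]. split.
    + apply ends_iff in Hends. destruct Hends as [_ [r Hr]]. apply ends_iff. split; eauto.
      eapply snoc_suffix; [|exact Hr]. discriminate.
    + intro Ht. apply ends_iff in Hends. destruct Hends as [[q Hq] _].
      destruct Hp as [_ [Hn _]].
      destruct l1 as [|c l1].
      * simpl in Hq. inversion Hq; subst. exact (Hirr _ He).
      * simpl in Hq. inversion Hq; subst. apply NoDup_cons_iff in Hn. destruct Hn as [Hn _].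
        apply Hn. apply in_or_app. right. exact Ht.
  - right. exists p. auto.
Qed.


Lemma last_in {X} (p : list X) a b : ends p a b -> In b p /\ In a p.
Proof.
  intro H. apply ends_iff in H. destruct H as [[q Hq] [r Hr]]. split.
  - rewrite Hr. apply in_or_app. right. left. reflexivity.
  - rewrite Hq. left. reflexivity.
Qed.

Lemma three_le {X} (c : list X) x y z :
  NoDup c -> In x c -> In y c -> In z c -> x <> y -> y <> z -> x <> z -> 3 <= length c.
Proof.
  intros Hn Hx Hy Hz Hxy Hyz Hxz.
  change 3 with (length [x; y; z]). apply NoDup_incl_length.
  - constructor. simpl. intros [H|[H|[]]]; auto.
    constructor. simpl. intros [H|[]]; auto. constructor; [simpl; auto|constructor].
  - intros w [H|[H|[H|[]]]]; subst; auto.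
Qed.

Lemma far_disj {T} (tE : T -> T -> Prop) t t' s :
  is_tree tE -> tE t t' -> Far tE t t' s -> Far tE t' t s -> False.
Proof.
  intros [[Hsym Hirr] [_ Hacyc]] He [P1 [HP1 [He1 Ht1]]] [P2 [HP2 [He2 Ht2]]].
  destruct (first_common P1 P2) as [q2 [m [r2 [E2 [Hm Hq2]]]]].
  { exists s. split; apply (last_in _ _ _ He1) || apply (last_in _ _ _ He2). }
  destruct (in_split _ _ Hm) as [q1 [r1 E1]].
  apply ends_iff in He1. destruct He1 as [[a1 Ha1] _].
  apply ends_iff in He2. destruct He2 as [[a2 Ha2] _].
  assert (Hmt : m <> t). { intro; subst. apply Ht1. exact Hm. }
  assert (Hmt' : m <> t'). { intro; subst. apply Ht2. rewrite E2. apply in_or_app. right; left; reflexivity. }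
  destruct q2 as [|c q2'].
  { simpl in E2. rewrite E2 in Ha2. inversion Ha2. contradiction. }
  rewrite E2 in Ha2. simpl in Ha2. inversion Ha2; subst c.
  apply Hacyc. exists (q1 ++ m :: rev (t :: q2')), t', t.
  assert (HP1' := path_prefix _ _ _ _ (eq_ind _ (is_path tE) HP1 _ E1)).
  assert (HP2' := path_prefix _ _ _ _ (eq_ind _ (is_path tE) HP2 _ E2)).
  assert (Hdisj : forall z, In z (q1 ++ [m]) -> ~ In z (rev (t :: q2'))).
  { intros z Hz Hz'. apply in_rev in Hz'. apply (Hq2 z Hz'). rewrite E1.
    apply in_app_or in Hz. apply in_or_app. destruct Hz as [Hz|[Hz|[]]]; [left; auto|right; left; auto]. }
  assert (Hnd : NoDup (q1 ++ m :: rev (t :: q2'))).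
  { replace (q1 ++ m :: rev (t :: q2')) with ((q1 ++ [m]) ++ rev (t :: q2'))
      by (rewrite <- app_assoc; reflexivity).
    apply NoDup_app; auto. exact (proj1 (proj2 HP1')). apply NoDup_rev.
    destruct HP2' as [_ [Hn _]]. exact (NoDup_app_remove_r _ _ Hn). }
  assert (Hin_t : In t (q1 ++ m :: rev (t :: q2'))).
  { apply in_or_app. right. right. apply in_rev. rewrite rev_involutive. left; reflexivity. }
  assert (Hin_t' : In t' (q1 ++ m :: rev (t :: q2'))).
  { destruct q1 as [|d q1']; simpl in E1; rewrite E1 in Ha1; inversion Ha1; subst; simpl; auto. }
  assert (Hin_m : In m (q1 ++ m :: rev (t :: q2'))).
  { apply in_or_app. right. left. reflexivity. }
  split; [|split; [|split]].
  - split; [destruct q1; discriminate|]. split; [exact Hnd|].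
    apply chain_join. exact (proj2 (proj2 HP1')).
    replace (m :: rev (t :: q2')) with (rev ((t :: q2') ++ [m])) by (rewrite rev_app_distr; reflexivity).
    apply chain_rev; [exact Hsym|]. exact (proj2 (proj2 HP2')).
  - apply (three_le _ t' m t Hnd); auto. intro; subst; exact (Hirr _ He).
  - apply ends_iff. split.
    + destruct q1 as [|d q1']; simpl in E1; rewrite E1 in Ha1; inversion Ha1; subst; simpl; eauto.
    + exists (q1 ++ m :: rev q2'). simpl. rewrite app_comm_cons, app_assoc. reflexivity.
  - exact He.
Qed.

Lemma far_step {T} (tE : T -> T -> Prop) t t' s s2 :
  is_tree tE -> tE t t' -> Far tE t t' s -> tE s s2 -> s2 <> t -> Far tE t t' s2.
Proof.
  intros Htr He Hs Hss2 Hne.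
  destruct (far_cover tE t t' s2 Htr He) as [H|H]; [exact H|exfalso].
  assert (Htr' := Htr). destruct Htr' as [[Hsym Hirr] [_ Hacyc]].
  destruct H as [q [Hq [Heq Hnt']]].
  destruct (ends_iff q t s2) as [Hei _]. destruct (Hei Heq) as [[a Ha] [r Hr]].
  destruct (classic (s = t')) as [E|E].
  - subst s. apply Hacyc. exists (q ++ [t']), t, t'.
    assert (Hnd : NoDup (q ++ [t'])).
    { apply NoDup_app; [apply Hq|constructor; [intros []|constructor]|].
      intros z Hz [Hz'|[]]; subst; contradiction. }
    split; [|split; [|split]].
    + split; [destruct q; discriminate|]. split; [exact Hnd|].
      rewrite Hr, <- app_assoc. simpl. apply chain_join.
      rewrite <- Hr. apply Hq. simpl. split; auto.
    + apply (three_le _ t s2 t' Hnd).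
      * rewrite Ha. left; reflexivity.
      * rewrite Hr. apply in_or_app; left; apply in_or_app; right; left; reflexivity.
      * apply in_or_app; right; left; reflexivity.
      * auto.
      * intro; subst. apply Hnt'. rewrite Hr. apply in_or_app; right; left; reflexivity.
      * intro; subst; exact (Hirr _ He).
    + apply ends_iff. split; [rewrite Ha; simpl; eauto|eauto].
    + apply Hsym. exact He.
  - apply (far_disj tE t t' s Htr He Hs).
    destruct (classic (In s q)) as [Hin|Hin].
    + destruct (in_split _ _ Hin) as [l1 [l2 E1]].
      exists (l1 ++ [s]). split; [eapply path_prefix; rewrite <- E1; exact Hq|]. split.
      * apply ends_iff. split; eauto. destruct l1 as [|c l1]; simpl in *.
        -- rewrite E1 in Ha. inversion Ha; subst. eauto.
        -- rewrite E1 in Ha. inversion Ha; subst. eauto.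
      * intro Hin'. apply Hnt'. rewrite E1. apply in_app_or in Hin'. apply in_or_app.
        destruct Hin' as [H|[H|[]]]; [left; auto|subst; contradiction].
    + exists (q ++ [s]). split; [|split].
      * split; [destruct q; discriminate|]. split.
        -- apply NoDup_app; [apply Hq|constructor; [intros []|constructor]|].
           intros z Hz [Hz'|[]]; subst; contradiction.
        -- rewrite Hr, <- app_assoc. simpl. apply chain_join. rewrite <- Hr. apply Hq.
           simpl. split; auto.
      * apply ends_iff. split; [rewrite Ha; simpl; eauto|eauto].
      * intro Hin'. apply in_app_or in Hin'. destruct Hin' as [H|[H|[]]]; [contradiction|].
        subst. apply E. reflexivity.
Qed.

Lemma far_walk {T} (tE : T -> T -> Prop) t t' :
  is_tree tE -> tE t t' -> forall w s, Far tE t t' s -> chain tE (s :: w) ->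
  (forall x, In x w -> x <> t) -> forall x, In x w -> Far tE t t' x.
Proof.
  intros Htr He w. induction w as [|a w IH]; intros s Hs Hc Hnt x Hx; [destruct Hx|].
  simpl in Hc. destruct Hc as [Hsa Hc].
  assert (Ha : Far tE t t' a) by (apply (far_step tE t t' s a); auto; apply Hnt; left; auto).
  destruct Hx as [Hx|Hx]; [subst; exact Ha|].
  apply (IH a Ha Hc); auto. intros y Hy. apply Hnt. right; auto.
Qed.

Lemma far_self {T} (tE : T -> T -> Prop) t t' :
  is_tree tE -> tE t t' -> Far tE t t' t'.
Proof.
  intros [[_ Hirr] _] He. exists [t']. split; [|split].
  - split; [discriminate|]. split; [constructor; [intros []|constructor]|exact I].
  - split; reflexivity.
  - intros [H|[]]. subst. exact (Hirr _ He).
Qed.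

Lemma cross {T V} (tE : T -> T -> Prop) (B : T -> V -> Prop) t t' v s s' :
  is_tree tE -> tE t t' ->
  (forall t1 t2, B t1 v -> B t2 v ->
     exists p, is_path tE p /\ ends p t1 t2 /\ Forall (fun t => B t v) p) ->
  B s v -> Far tE t' t s -> B s' v -> Far tE t t' s' -> B t v /\ B t' v.
Proof.
  intros Htr He Hsub Hs Hns Hs' Hfs'.
  assert (He' : tE t' t) by (apply (proj1 (proj1 Htr)); exact He).
  split.
  - apply NNPP. intro Hnt.
    destruct (Hsub s' s Hs' Hs) as [p [Hp [Hend HF]]].
    destruct (ends_iff p s' s) as [Hi _]. destruct (Hi Hend) as [[w Hw] [r Hr]].
    apply (far_disj tE t t' s Htr He); [|exact Hns].
    destruct w as [|y w].
    + assert (s = s') by (rewrite Hw in Hr; destruct r as [|? r]; simpl in Hr; inversion Hr; [reflexivity| destruct r; discriminate]).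
      subst; exact Hfs'.
    + apply (far_walk tE t t' Htr He (y :: w) s' Hfs').
      * rewrite <- Hw. apply Hp.
      * intros x Hx Ex. subst x. apply Hnt. rewrite Forall_forall in HF. apply HF. rewrite Hw. right. exact Hx.
      * assert (In s p) by (rewrite Hr; apply in_or_app; right; left; auto).
        rewrite Hw in H. destruct H as [H|H]; auto. subst s'.
        exfalso. apply (far_disj tE t t' s Htr He Hfs' Hns).
  - apply NNPP. intro Hnt.
    destruct (Hsub s s' Hs Hs') as [p [Hp [Hend HF]]].
    destruct (ends_iff p s s') as [Hi _]. destruct (Hi Hend) as [[w Hw] [r Hr]].
    apply (far_disj tE t t' s' Htr He Hfs').
    destruct w as [|y w].
    + assert (s' = s) by (rewrite Hw in Hr; destruct r as [|? r]; simpl in Hr; inversion Hr; [reflexivity| destruct r; discriminate]).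
      subst; exact Hns.
    + apply (far_walk tE t' t (proj1 (conj Htr Htr)) He' (y :: w) s Hns).
      * rewrite <- Hw. apply Hp.
      * intros x Hx Ex. subst x. apply Hnt. rewrite Forall_forall in HF. apply HF. rewrite Hw. right. exact Hx.
      * assert (In s' p) by (rewrite Hr; apply in_or_app; right; left; auto).
        rewrite Hw in H. destruct H as [H|H]; auto. subst s'.
        exfalso. apply (far_disj tE t t' s Htr He Hfs' Hns).
Qed.


Definition GV : Type := (nat + nat)%type.

Definition gadj (u w : GV) : Prop :=
  match u, w with
  | inl i, inl j => i <> j
  | inr i, inr j => j = S i \/ i = S j
  | inr i, inl j => j = S i
  | inl j, inr i => j = S i
  end.

Lemma GV_eq_dec : forall x y : GV, {x = y} + {x <> y}.
Proof. decide equality; apply Nat.eq_dec. Qed.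

Lemma adj_sym u w : gadj u w -> gadj w u.
Proof. destruct u, w; simpl; intuition. Qed.

Lemma adj_simple : simple_graph gadj.
Proof. split; [exact adj_sym|]. intros [i|i]; simpl; lia. Qed.

Lemma V_countable : countable GV.
Proof.
  exists (fun v => match v with inl i => i + i | inr i => S (i + i) end).
  intros [i|i] [j|j] H; f_equal; lia.
Qed.

Lemma no_disj_aux (X : list GV) : forall (Ps : list (list GV)),
  Forall (fun p => exists x, In x X /\ In x p) Ps ->
  (forall i j x, i < j < length Ps -> In x (nth i Ps []) -> ~ In x (nth j Ps [])) ->
  length Ps <= length X.
Proof.
  revert X. intros X Ps. revert X. induction Ps as [|p Ps IH]; intros X HF HD; simpl; [lia|].
  inversion HF as [|? ? [x [HxX Hxp]] HF']; subst.
  assert (Hlt := remove_length_lt GV_eq_dec X x HxX).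
  assert (length Ps <= length (remove GV_eq_dec x X)); [|lia].
  apply IH.
  - rewrite Forall_forall in *. intros p' Hp'. destruct (HF' p' Hp') as [x' [Hx'X Hx'p']].
    exists x'. split; auto. apply in_in_remove; auto. intro E; subst x'.
    destruct (In_nth _ _ [] Hp') as [n [Hn Hnth]].
    apply (HD 0 (S n) x); simpl; [lia|exact Hxp|rewrite Hnth; exact Hx'p'].
  - intros i j y Hij Hy. apply (HD (S i) (S j) y); simpl; [lia|exact Hy].
Qed.

Lemma no_disj (Z1 Z2 X : list GV) l :
  length X < l ->
  (forall p a b, is_path gadj p -> ends p a b -> In a Z1 -> In b Z2 -> exists x, In x X /\ In x p) ->
  ~ has_disjoint_AB_paths gadj Z1 Z2 l.
Proof.
  intros Hl Hsep [Ps [HlenP [HF HD]]].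
  assert (length Ps <= length X); [|lia].
  apply no_disj_aux; auto.
  rewrite Forall_forall in *. intros p Hp. destruct (HF p Hp) as [a [b [Hpath [Hend [_ [Ha [_ Hb]]]]]]].
  eapply Hsep; eauto.
Qed.

Lemma crossing (C : GV -> Prop) : forall q a, chain gadj (a :: q) -> C a ->
  ~ (forall x, In x q -> C x) -> exists u w, gadj u w /\ In w q /\ C u /\ ~ C w.
Proof.
  induction q as [|b q IH]; intros a Hc Ha Hn.
  - exfalso. apply Hn. intros x [].
  - simpl in Hc. destruct Hc as [Hab Hc].
    destruct (classic (C b)) as [Hb|Hb].
    + destruct (IH b Hc Hb) as [u [w [H1 [H2 H3]]]].
      * intro Hall. apply Hn. intros x [Hx|Hx]; [subst; auto|auto].
      * exists u, w. split; auto. split; [right; auto|auto].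
    + exists a, b. split; auto. split; [left; auto|auto].
Qed.

Lemma crossing_path (C : GV -> Prop) p a b : is_path gadj p -> ends p a b -> C a -> ~ C b ->
  exists u w, gadj u w /\ In w p /\ C u /\ ~ C w.
Proof.
  intros [_ [_ Hc]] He Ha Hb.
  destruct (ends_iff p a b) as [Hi _]. destruct (Hi He) as [[q Hq] [r Hr]]. subst p.
  destruct (crossing C q a Hc Ha) as [u [w [H1 [H2 H3]]]].
  - intro Hall. destruct q as [|c q].
    + assert (b = a) by (destruct r as [|? r]; simpl in Hr; inversion Hr; [reflexivity| destruct r; discriminate]).
      subst; contradiction.
    + apply Hb, Hall. assert (In b (a :: c :: q)) by (rewrite Hr; apply in_or_app; right; left; auto).
      destruct H as [H|H]; [|exact H]. subst b. contradiction.
  - exists u, w. split; auto. split; [right; auto|auto].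
Qed.

Lemma filter_ex (P : GV -> Prop) (L : list GV) :
  exists X, NoDup X /\ forall x, In x X <-> (In x L /\ P x).
Proof.
  induction L as [|a L [X [HN HX]]].
  - exists []. split; [constructor|]. simpl. tauto.
  - destruct (classic (P a /\ ~ In a X)) as [[Pa Na]|H].
    + exists (a :: X). split; [constructor; auto|]. intro x. simpl. rewrite HX.
      split; [intros [E|[H1 H2]]; [subst; auto|auto]|].
      intros [[E|H1] H2]; [left; auto|right; auto].
    + exists X. split; auto. intro x. rewrite HX. simpl. split; [tauto|].
      intros [[E|H1] H2]; [subst|auto]. split; auto. apply NNPP. intro Hn. apply H. split; auto.
      intro Hx. apply Hn. apply HX. exact Hx.
Qed.

Definition idx (v : GV) : nat := match v with inl i => i | inr i => i end.

Lemma idx_le (L : list GV) v : In v L -> idx v <= list_sum (map idx L).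
Proof.
  induction L as [|a L IH]; simpl; [intros []|]. intros [E|H]; [subst; lia|]. specialize (IH H); lia.
Qed.

Lemma fresh (L : list GV) m : exists k, m <= k /\ ~ In (inl k) L.
Proof.
  exists (m + S (list_sum (map idx L))). split; [lia|]. intro H.
  apply idx_le in H. simpl in H. lia.
Qed.


Definition Good {T} (tE : T -> T -> Prop) (B : T -> GV -> Prop) t t' : Prop :=
  tE t t' /\ forall k s, ~ B t (inl k) -> B s (inl k) -> Far tE t t' s.

Definition SN {T} (tE : T -> T -> Prop) (B : T -> GV -> Prop) t t' v : Prop :=
  forall s, B s v -> Far tE t' t s.

Definition Bad {T} (B : T -> GV -> Prop) t : Prop :=
  exists (l : nat) (Z1 Z2 : list GV),
    NoDup Z1 /\ NoDup Z2 /\ length Z1 = l /\ length Z2 = l /\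
    (forall v, In v Z1 -> B t v) /\ (forall v, In v Z2 -> B t v) /\
    ~ has_disjoint_AB_paths gadj Z1 Z2 l.

Lemma not_in_bag {T} (B : T -> GV -> Prop) : finite_parts B ->
  forall t m, exists k, m <= k /\ ~ B t (inl k).
Proof.
  intros HF t m. destruct (HF t) as [L HL]. destruct (fresh L m) as [k [Hk Hn]].
  exists k. split; auto.
Qed.

Lemma far_subtree {T} (tE : T -> T -> Prop) (B : T -> GV -> Prop) t t' s s2 v :
  tree_decomposition gadj tE B -> tE t t' ->
  Far tE t t' s -> B s v -> ~ B t v -> B s2 v -> Far tE t t' s2.
Proof.
  intros [Htr [_ [_ Hsub]]] He Hs Hsv Htv Hs2.
  destruct (Hsub v s s2 Hsv Hs2) as [p [Hp [Hend HFo]]].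
  destruct (ends_iff p s s2) as [Hi _]. destruct (Hi Hend) as [[w Hw] _].
  destruct (last_in p s s2 Hend) as [Hin _]. rewrite Hw in Hin.
  destruct Hin as [E|Hin]; [subst; exact Hs|].
  apply (far_walk tE t t' Htr He w s Hs); auto.
  - rewrite <- Hw. apply Hp.
  - intros x Hx E. subst x. apply Htv. rewrite Forall_forall in HFo. apply HFo. rewrite Hw. right; auto.
Qed.

Lemma next_ex {T} (tE : T -> T -> Prop) (B : T -> GV -> Prop) :
  tree_decomposition gadj tE B -> finite_parts B -> forall t, exists t', Good tE B t t'.
Proof.
  intros HTD HF t. assert (HTD' := HTD). destruct HTD' as [Htr [Hcov [Hedge Hsub]]].
  destruct (not_in_bag B HF t 0) as [ks [_ Hks]].
  destruct (Hcov (inl ks)) as [s Hs].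
  destruct (proj1 (proj2 Htr) t s) as [p [Hp Hend]].
  destruct (ends_iff p t s) as [Hi _]. destruct (Hi Hend) as [[q Hq] [r Hr]]. subst p.
  destruct q as [|t' q'].
  { assert (s = t) by (destruct r as [|? r]; simpl in Hr; inversion Hr; [reflexivity| destruct r; discriminate]).
    subst. contradiction. }
  assert (He : tE t t') by (destruct Hp as [_ [_ [H _]]]; exact H).
  assert (Hfs : Far tE t t' s).
  { exists (t' :: q'). split; [apply (path_suffix tE [t] t' q'); exact Hp|]. split.
    - apply ends_iff. split; eauto. eapply (snoc_suffix [t]); [discriminate|exact Hr].
    - destruct Hp as [_ [Hn _]]. apply NoDup_cons_iff in Hn. apply Hn. }
  exists t'. split; auto. intros k s2 Hk Hs2.
  destruct (classic (k = ks)) as [E|E].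
  - subst. apply (far_subtree tE B t t' s s2 (inl ks) HTD He Hfs Hs Hks Hs2).
  - destruct (Hedge (inl k) (inl ks) E) as [s3 [H3k H3ks]].
    assert (Hf3 := far_subtree tE B t t' s s3 (inl ks) HTD He Hfs Hs Hks H3ks).
    apply (far_subtree tE B t t' s3 s2 (inl k) HTD He Hf3 H3k Hk Hs2).
Qed.

Lemma K_not_SN {T} (tE : T -> T -> Prop) (B : T -> GV -> Prop) t t' :
  tree_decomposition gadj tE B -> finite_parts B -> Good tE B t t' ->
  forall k, ~ SN tE B t t' (inl k).
Proof.
  intros HTD HF [He HG] k Hsn. assert (HTD' := HTD). destruct HTD' as [Htr [Hcov [Hedge Hsub]]].
  destruct (not_in_bag B HF t (S k)) as [ks [Hle Hks]].
  destruct (Hedge (inl k) (inl ks)) as [s3 [H3k H3ks]]; [simpl; lia|].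
  apply (far_disj tE t t' s3 Htr He); [apply (HG ks); auto|apply Hsn; auto].
Qed.

Lemma K_stay {T} (tE : T -> T -> Prop) (B : T -> GV -> Prop) t t' j :
  tree_decomposition gadj tE B -> finite_parts B -> Good tE B t t' ->
  B t (inl j) -> B t' (inl j).
Proof.
  intros HTD HF [He HG] Hj. assert (HTD' := HTD). destruct HTD' as [Htr [Hcov [Hedge Hsub]]].
  destruct (not_in_bag B HF t (S j)) as [ks [Hle Hks]].
  destruct (Hedge (inl j) (inl ks)) as [s3 [H3k H3ks]]; [simpl; lia|].
  apply (cross tE B t t' (inl j) t s3 Htr He (Hsub (inl j)) Hj); auto.
  - apply far_self; auto. apply (proj1 (proj1 Htr)). exact He.
  - apply (HG ks); auto.
Qed.

Lemma near_of {T} (tE : T -> T -> Prop) (B : T -> GV -> Prop) t t' y :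
  tree_decomposition gadj tE B -> tE t t' -> B t y -> ~ B t' y -> SN tE B t t' y.
Proof.
  intros HTD He Hy Hy' s Hs. assert (HTD' := HTD). destruct HTD' as [Htr [Hcov [Hedge Hsub]]].
  destruct (far_cover tE t t' s Htr He) as [H|H]; [|exact H].
  exfalso. apply Hy'.
  apply (cross tE B t t' y t s Htr He (Hsub y) Hy); auto.
  apply far_self; auto. apply (proj1 (proj1 Htr)). exact He.
Qed.

Lemma sep {T} (tE : T -> T -> Prop) (B : T -> GV -> Prop) t t' u w :
  tree_decomposition gadj tE B -> tE t t' -> SN tE B t t' u -> gadj u w -> ~ SN tE B t t' w ->
  B t w /\ B t' w.
Proof.
  intros HTD He Hu Huw Hw. assert (HTD' := HTD). destruct HTD' as [Htr [Hcov [Hedge Hsub]]].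
  destruct (Hedge u w Huw) as [s [Hsu Hsw]].
  assert (Hs : Far tE t' t s) by (apply Hu; auto).
  apply NNPP. intro Hn. apply Hw. intros s' Hs'.
  destruct (far_cover tE t t' s' Htr He) as [H|H]; [|exact H].
  exfalso. apply Hn. apply (cross tE B t t' w s s' Htr He (Hsub w)); auto.
Qed.

Lemma caseA {T} (tE : T -> T -> Prop) (B : T -> GV -> Prop) t t' y :
  tree_decomposition gadj tE B -> finite_parts B -> Good tE B t t' ->
  B t (inl 0) -> B t y -> ~ B t' y -> Bad B t.
Proof.
  intros HTD HF HG H0 Hy Hy'. assert (He := proj1 HG).
  destruct (HF t) as [L HL].
  destruct (filter_ex (fun x => B t x /\ B t' x /\ x <> inl 0) L) as [X [HN HX]].
  assert (HSy := near_of tE B t t' y HTD He Hy Hy').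
  exists (S (length X)), (y :: X), (inl 0 :: X).
  split; [constructor; auto; intro Hin; apply HX in Hin; tauto|].
  split; [constructor; auto; intro Hin; apply HX in Hin; tauto|].
  split; [reflexivity|]. split; [reflexivity|].
  split; [intros v [E|Hv]; [subst; auto|apply HX in Hv; tauto]|].
  split; [intros v [E|Hv]; [subst; auto|apply HX in Hv; tauto]|].
  apply (no_disj _ _ X); [lia|].
  intros p a b Hp Hend Ha Hb.
  destruct (last_in p a b Hend) as [Hbp Hap].
  destruct Ha as [Ea|Ha]; [|exists a; auto].
  destruct Hb as [Eb|Hb]; [|exists b; auto]. subst a b.
  destruct (crossing_path (SN tE B t t') p y (inl 0) Hp Hend HSy (K_not_SN tE B t t' HTD HF HG 0))
    as [u [w [Huw [Hw [Hu Hnw]]]]].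
  destruct (sep tE B t t' u w HTD He Hu Huw Hnw) as [Hw1 Hw2].
  exists w. split; auto. apply HX. split; auto. split; auto. split; auto.
  intro E. subst w. destruct u as [j|j].
  - apply (K_not_SN tE B t t' HTD HF HG j). exact Hu.
  - simpl in Huw. discriminate.
Qed.


Lemma descent {T} (tE : T -> T -> Prop) (B : T -> GV -> Prop) (nxt : T -> T) t0 :
  is_tree tE -> (forall t, tE t (nxt t)) ->
  forall s, exists n, ~ Far tE (Nat.iter n nxt t0) (Nat.iter (S n) nxt t0) s.
Proof.
  intros Htr Hn s.
  assert (Hgen : forall d n p, is_path tE p -> ends p (Nat.iter n nxt t0) s -> length p <= d ->
     exists m, ~ Far tE (Nat.iter m nxt t0) (Nat.iter (S m) nxt t0) s).
  { induction d as [|d IH]; intros n p Hp Hend Hl.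
    - destruct p; [destruct Hp as [H _]; contradiction|simpl in Hl; lia].
    - destruct (classic (Far tE (Nat.iter n nxt t0) (Nat.iter (S n) nxt t0) s)) as [Hf|Hf]; [|eauto].
      set (a := Nat.iter n nxt t0) in *. set (x := Nat.iter (S n) nxt t0) in *.
      assert (He : tE a x) by apply Hn.
      destruct (classic (In x p)) as [Hin|Hin].
      + destruct (in_split _ _ Hin) as [l1 [l2 E]]. subst p.
        destruct (ends_iff (l1 ++ x :: l2) a s) as [Hi _]. destruct (Hi Hend) as [[q Hq] [r Hr]].
        destruct l1 as [|c l1].
        * simpl in Hq. injection Hq as Hxa. rewrite Hxa in He. exfalso. exact (proj2 (proj1 Htr) _ He).
        * apply (IH (S n) (x :: l2)).
          -- eapply path_suffix; exact Hp.
          -- apply ends_iff. split; eauto. eapply snoc_suffix; [discriminate|exact Hr].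
          -- simpl in Hl. rewrite length_app in Hl. simpl in Hl. simpl. lia.
      + exfalso. apply (far_disj tE a x s Htr He Hf). exists p. auto. }
  destruct (proj1 (proj2 Htr) t0 s) as [p [Hp Hend]].
  apply (Hgen (length p) 0 p Hp Hend). lia.
Qed.

Lemma walk_SN (P : nat -> Prop) m : forall d, P m -> ~ P (m + d) -> exists i, m <= i /\ P i /\ ~ P (S i).
Proof.
  induction d as [|d IH]; intros H1 H2.
  - rewrite Nat.add_0_r in H2. contradiction.
  - destruct (classic (P (m + d))) as [H|H].
    + exists (m + d). split; [lia|]. split; auto. rewrite Nat.add_succ_r in H2. exact H2.
    + destruct (IH H1 H) as [i Hi]. exists i. exact Hi.
Qed.

Lemma final_sep j p a b : is_path gadj p -> ends p a b -> (exists x, a = inr x /\ x <= j) ->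
  (exists k, b = inl k) ->
  exists x, In x (map inl (seq 1 (S j)) ++ [inr (S j)]) /\ In x p.
Proof.
  intros Hp Hend Ha [k Hb].
  destruct (crossing_path (fun v : GV => exists x, v = inr x /\ x <= j) p a b Hp Hend Ha)
    as [u [w [Huw [Hw [[x [Eu Hx]] Hnw]]]]].
  { intros [x [E _]]. subst. discriminate. }
  exists w. split; auto. subst u. destruct w as [y|y]; simpl in Huw.
  - apply in_or_app. left. apply in_map. apply in_seq. lia.
  - apply in_or_app. right. left. destruct Huw as [E|E].
    + destruct (Nat.le_gt_cases y j) as [H|H]; [exfalso; apply Hnw; exists y; auto|].
      f_equal. lia.
    + exfalso. apply Hnw. exists y. split; auto. lia.
Qed.

Theorem mainTheorem3 :
  exists (V : Type) (adj : V -> V -> Prop),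
    simple_graph adj /\ countable V /\
    forall (T : Type) (tE : T -> T -> Prop) (B : T -> V -> Prop),
      tree_decomposition adj tE B -> finite_parts B ->
      exists (t : T) (l : nat) (Z1 Z2 : list V),
        NoDup Z1 /\ NoDup Z2 /\ length Z1 = l /\ length Z2 = l /\
        (forall v, In v Z1 -> B t v) /\ (forall v, In v Z2 -> B t v) /\
        ~ has_disjoint_AB_paths adj Z1 Z2 l.
Proof.
  exists GV, gadj. split; [exact adj_simple|]. split; [exact V_countable|].
  intros T tE B HTD HF.
  cut (exists t, Bad B t).
  { intros [t [l [Z1 [Z2 H]]]]. exists t, l, Z1, Z2. exact H. }
  assert (HTD' := HTD). destruct HTD' as [Htr [Hcov [Hedge Hsub]]].
  set (nxt := fun t => proj1_sig (constructive_indefinite_description _ (next_ex tE B HTD HF t))).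
  assert (HG : forall t, Good tE B t (nxt t)).
  { intro t. exact (proj2_sig (constructive_indefinite_description _ (next_ex tE B HTD HF t))). }
  destruct (Hcov (inl 0)) as [t0 Ht0].
  set (tn := fun n => Nat.iter n nxt t0).
  assert (Hk0 : forall n, B (tn n) (inl 0)).
  { induction n as [|n IH]; [exact Ht0|]. apply (K_stay tE B (tn n) (nxt (tn n)) 0 HTD HF (HG _) IH). }
  destruct (classic (exists n y, B (tn n) y /\ ~ B (tn (S n)) y)) as [[n [y [Hy Hy']]]|Hnest].
  { exists (tn n). apply (caseA tE B (tn n) (nxt (tn n)) y HTD HF (HG _) (Hk0 n) Hy Hy'). }
  assert (Hmono : forall n y, B (tn n) y -> B (tn (S n)) y).
  { intros n y Hy. apply NNPP. intro H. apply Hnest. eauto. }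
  assert (Hmono' : forall d n y, B (tn n) y -> B (tn (n + d)) y).
  { induction d as [|d IH]; intros n y Hy; [rewrite Nat.add_0_r; exact Hy|].
    rewrite Nat.add_succ_r. apply Hmono. apply IH. exact Hy. }
  assert (HtE : forall t, tE t (nxt t)) by (intro t; apply HG).
  assert (HK : forall k, exists n, B (tn n) (inl k)).
  { intro k. apply NNPP. intro Hno. destruct (Hcov (inl k)) as [s Hs].
    destruct (descent tE B nxt t0 Htr HtE s) as [n Hn]. apply Hn.
    apply (proj2 (HG (tn n)) k s); auto. intro H. apply Hno. eauto. }
  assert (HR : forall m, exists i n, m <= i /\ B (tn n) (inr i)).
  { intro m. destruct (classic (exists n, B (tn n) (inr m))) as [[n Hn]|Hno]; [exists m, n; auto|].
    destruct (Hcov (inr m)) as [s Hs].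
    destruct (descent tE B nxt t0 Htr HtE s) as [n Hn].
    set (t := tn n). set (t' := tn (S n)).
    assert (Hgood : Good tE B t t') by apply HG.
    assert (He : tE t t') by apply HG.
    assert (Hnear : Far tE t' t s).
    { destruct (far_cover tE t t' s Htr He) as [H|H]; [contradiction|exact H]. }
    assert (HSm : SN tE B t t' (inr m)).
    { intros s' Hs'. destruct (far_cover tE t t' s' Htr He) as [H|H]; [|exact H].
      exfalso. apply Hno. exists n.
      exact (proj1 (cross tE B t t' (inr m) s s' Htr He (Hsub (inr m)) Hs Hnear Hs' H)). }
    destruct (not_in_bag B HF t (S (S m))) as [J [HJ HJn]].
    assert (HnSJ : ~ SN tE B t t' (inr (pred J))).
    { intro H. destruct (Hedge (inr (pred J)) (inl J)) as [s3 [H3r H3k]]; [simpl; lia|].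
      apply (far_disj tE t t' s3 Htr He); [apply (proj2 Hgood J); auto|apply H; auto]. }
    destruct (walk_SN (fun i => SN tE B t t' (inr i)) m (pred J - m) HSm) as [i [Hmi [Hi Hi']]].
    { replace (m + (pred J - m)) with (pred J) by lia. exact HnSJ. }
    exists (S i), n. split; [lia|].
    exact (proj1 (sep tE B t t' (inr i) (inr (S i)) HTD He Hi (or_introl eq_refl) Hi')). }
  destruct (HR 0) as [i1 [n1 [_ Hi1]]].
  destruct (HR (S i1)) as [j [n2 [Hij Hj]]].
  set (Ls := inr i1 :: inr j :: map inl (seq 0 (j + 3))).
  assert (HU : forall Ls, (forall v, In v Ls -> exists n, B (tn n) v) -> exists N, forall v, In v Ls -> B (tn N) v).
  { induction Ls0 as [|v Ls0 IH]; intros Hall; [exists 0; intros v []|].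
    destruct (Hall v (or_introl eq_refl)) as [nv Hnv].
    destruct IH as [N HN]; [intros w Hw; apply Hall; right; exact Hw|].
    exists (nv + N). intros w [E|Hw].
    - subst w. apply Hmono'. exact Hnv.
    - rewrite Nat.add_comm. apply Hmono'. apply HN. exact Hw. }
  destruct (HU Ls) as [N HN].
  { intros v [E|[E|Hv]]; [subst; eauto|subst; eauto|].
    apply in_map_iff in Hv. destruct Hv as [k [E _]]. subst. apply HK. }
  exists (tn N), (j + 3), (inr i1 :: inr j :: map inl (seq 1 (S j))), (map inl (seq 0 (j + 3))).
  assert (Hinj : forall a b : nat, (inl a : GV) = inl b -> a = b) by (intros a b E; inversion E; auto).
  split.
  { constructor; [intros [E|Hx]; [inversion E; lia|apply in_map_iff in Hx; destruct Hx as [? [E _]]; discriminate]|].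
    constructor; [intro Hx; apply in_map_iff in Hx; destruct Hx as [? [E _]]; discriminate|].
    apply NoDup_map_inv with (f := fun v : GV => match v with inl a => a | inr a => a end).
    rewrite map_map. cbv beta iota. rewrite map_id. apply seq_NoDup. }
  split.
  { apply NoDup_map_inv with (f := fun v : GV => match v with inl a => a | inr a => a end).
    rewrite map_map. cbv beta iota. rewrite map_id. apply seq_NoDup. }
  split; [simpl; rewrite length_map, length_seq; lia|].
  split; [rewrite length_map, length_seq; lia|].
  split.
  { intros v Hv. apply HN. unfold Ls. destruct Hv as [E|[E|Hv]]; [left; auto|right; left; auto|].
    right; right. apply in_map_iff in Hv. destruct Hv as [k [E Hk]]. subst. apply in_map.
    apply in_seq in Hk. apply in_seq. lia. }
  split.
  { intros v Hv. apply HN. unfold Ls. right; right. exact Hv. }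
  apply (no_disj _ _ (map inl (seq 1 (S j)) ++ [inr (S j)])).
  { rewrite length_app, length_map, length_seq. simpl. lia. }
  intros p a b Hp Hend Ha Hb.
  destruct (last_in p a b Hend) as [Hbp Hap].
  assert (Hb' : exists k, b = inl k).
  { apply in_map_iff in Hb; destruct Hb as [k [E _]]; exists k; symmetry; exact E. }
  destruct Ha as [Ea|[Ea|Ha]].
  - apply (final_sep j p a b Hp Hend); [exists i1; split; [symmetry; exact Ea|lia]|exact Hb'].
  - apply (final_sep j p a b Hp Hend); [exists j; split; [symmetry; exact Ea|lia]|exact Hb'].
  - exists a; split; [apply in_or_app; left; exact Ha|exact Hap].
Qed.
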